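(* For any ring $R$ the following conditions are equivalent: (1) every non-faithful left $R$-module is semiartinian; (2) every non-faithful left $R$-module is an essential extension of its socle; (3) every non-zero non-faithful left $R$-module contains a simple submodule; (4) $R/I$ is left semiartinian for every non-zero two-sided ideal $I$ of $R$; (5) for every proper left ideal $L$ of $R$ with non-zero core, the cyclic left $R$-module $R/L$ contains a simple submodule.
   Context: Rings are associative with identity $1\neq 0$. A module is non-faithful if its annihilator in $R$ is non-zero. A module $M$ is semiartinian if every non-zero homomorphic image of $M$ contains a simple submodule. A ring is left semiartinian if every non-zero left module over it has a simple submodule (equivalently, the ring is semiartinian as a left module over itself). The core of a left ideal $L$ is the largest two-sided ideal of $R$ contained in $L$ (i.e., the annihilator of the module $R/L$). *)

(* Defs.v *)
From HB Require Import structures.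
From mathcomp Require Import all_boot all_order all_algebra.
From Stdlib Require Import ClassicalEpsilon.

Set Implicit Arguments.
Unset Strict Implicit.
Unset Printing Implicit Defensive.

Import GRing.Theory.
Local Open Scope ring_scope.
Local Open Scope quotient_scope.

Definition asbool (P : Prop) : bool :=
  if excluded_middle_informative P then true else false.

Lemma asboolP (P : Prop) : reflect P (asbool P).
Proof. by rewrite /asbool; case: excluded_middle_informative => h; constructor. Qed.

Section ModuleNotions.
Variables (R : pzRingType) (M : lmodType R).

Definition submodule (S : M -> Prop) : Prop :=
  [/\ S 0, (forall x y, S x -> S y -> S (x + y))
         & (forall (r : R) x, S x -> S (r *: x))].

Definition nonzero_sub (S : M -> Prop) : Prop := exists2 x, S x & x <> 0.

Definition nonzero_module : Prop := exists x : M, x <> 0.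

Definition simple_submodule (S : M -> Prop) : Prop :=
  [/\ submodule S, nonzero_sub S &
      forall T : M -> Prop, submodule T -> (forall x, T x -> S x) ->
        (forall x, T x -> x = 0) \/ (forall x, S x -> T x)].

Definition has_simple_submodule : Prop :=
  exists S : M -> Prop, simple_submodule S.

(* socle: the sum of all simple submodules *)
Definition socle (x : M) : Prop :=
  exists s : seq M,
    (forall y, y \in s -> exists2 S, simple_submodule S & S y) /\
    x = \sum_(y <- s) y.

Definition essential_over_socle : Prop :=
  forall N : M -> Prop, submodule N -> nonzero_sub N ->
    exists x, [/\ N x, socle x & x <> 0].

Definition non_faithful : Prop :=
  exists2 r : R, r <> 0 & forall m : M, r *: m = 0.

End ModuleNotions.

Definition semiartinian (R : pzRingType) (M : lmodType R) : Prop :=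
  forall (N : lmodType R) (f : {linear M -> N}),
    (forall n : N, exists m : M, f m = n) ->
    nonzero_module N -> has_simple_submodule N.

Definition left_semiartinian (S : pzRingType) : Prop :=
  forall M : lmodType S, nonzero_module M -> has_simple_submodule M.

Definition left_ideal (R : pzRingType) (L : R -> Prop) : Prop :=
  @submodule R R^o L.

Definition two_sided_ideal (R : pzRingType) (I : R -> Prop) : Prop :=
  left_ideal I /\ (forall x r : R, I x -> I (x * r)).

(* core of a left ideal: the largest two-sided ideal contained in L
   (= union of all two-sided ideals contained in L) *)
Definition core (R : pzRingType) (L : R -> Prop) (r : R) : Prop :=
  exists J : R -> Prop, [/\ two_sided_ideal J, (forall x, J x -> L x) & J r].

Section QuotMod.
Variables (R : pzRingType) (V : lmodType R) (K : V -> Prop) (HK : submodule K).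

Lemma subK0 : K 0. Proof. by case: HK. Qed.
Lemma subKD x y : K x -> K y -> K (x + y). Proof. by case: HK => _ h _; apply: h. Qed.
Lemma subKZ (r : R) x : K x -> K (r *: x). Proof. by case: HK => _ _ h; apply: h. Qed.
Lemma subKN x : K x -> K (- x).
Proof. by move=> Kx; rewrite -scaleN1r; apply: subKZ. Qed.

Definition qequiv (x y : V) : bool := asbool (K (x - y)).

Lemma qequiv_is_equiv : equiv_class_of qequiv.
Proof.
split=> [x|x y|y x z]; rewrite /qequiv.
- by apply/asboolP; rewrite subrr; apply: subK0.
- apply/asboolP/asboolP => h; rewrite -opprB; exact: subKN.
- move=> /asboolP h1 /asboolP h2; apply/asboolP.
  by rewrite -[x](addrNK y) -addrA; apply: subKD.
Qed.

Canonical qequiv_equiv := EquivRelPack qequiv_is_equiv.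
Canonical qequiv_encModRel := defaultEncModRel qequiv.

Definition quotmod := {eq_quot qequiv}.

HB.instance Definition _ : EqQuotient V qequiv quotmod := EqQuotient.on quotmod.
HB.instance Definition _ := Choice.on quotmod.

Lemma qequivP x y : reflect (K (x - y)) (x == y %[mod quotmod]).
Proof. by rewrite piE; apply: asboolP. Qed.

Lemma Krepr x : K (repr (\pi_quotmod x) - x).
Proof. by have /eqP := reprK (\pi_quotmod x); rewrite piE => /asboolP. Qed.
Lemma Krepr' x : K (x - repr (\pi_quotmod x)).
Proof. by rewrite -opprB; apply: subKN; apply: Krepr. Qed.

Definition qzero : quotmod := lift_cst quotmod 0.
Definition qadd := lift_op2 quotmod +%R.
Definition qopp := lift_op1 quotmod -%R.
Definition qscale (r : R) := lift_op1 quotmod ( *:%R r).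

Canonical pi_qzero_morph := PiConst qzero.

Lemma pi_qopp : {morph \pi : x / - x >-> qopp x}.
Proof.
move=> x; unlock qopp; apply/eqP; rewrite piE; apply/asboolP.
by rewrite -opprD; apply: subKN; apply: Krepr'.
Qed.
Canonical pi_qopp_morph := PiMorph1 pi_qopp.

Lemma pi_qadd : {morph \pi : x y / x + y >-> qadd x y}.
Proof.
move=> x y /=; unlock qadd; apply/eqP; rewrite piE; apply/asboolP.
rewrite opprD addrACA; by apply: subKD; apply: Krepr'.
Qed.
Canonical pi_qadd_morph := PiMorph2 pi_qadd.

Lemma pi_qscale r : {morph \pi : x / r *: x >-> qscale r x}.
Proof.
move=> x; rewrite /qscale; unlock; apply/eqP; rewrite piE; apply/asboolP.
rewrite -scalerBr; by apply: subKZ; apply: Krepr'.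
Qed.
Canonical pi_qscale_morph r := PiMorph1 (pi_qscale r).

Lemma qaddA : associative qadd.
Proof. by move=> x y z; rewrite -[x]reprK -[y]reprK -[z]reprK !piE addrA. Qed.
Lemma qaddC : commutative qadd.
Proof. by move=> x y; rewrite -[x]reprK -[y]reprK !piE addrC. Qed.
Lemma qadd0 : left_id qzero qadd.
Proof. by move=> x; rewrite -[x]reprK !piE add0r. Qed.
Lemma qaddN : left_inverse qzero qopp qadd.
Proof. by move=> x; rewrite -[x]reprK !piE addNr. Qed.

HB.instance Definition _ := GRing.isZmodule.Build quotmod qaddA qaddC qadd0 qaddN.

Lemma qscaleA a b v : qscale a (qscale b v) = qscale (a * b) v.
Proof. by rewrite -[v]reprK !piE scalerA. Qed.
Lemma qscale1 : left_id 1 qscale.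
Proof. by move=> v; rewrite -[v]reprK !piE scale1r. Qed.
Lemma qscaleDr : right_distributive qscale +%R.
Proof.
move=> a u v; change (qscale a (qadd u v) = qadd (qscale a u) (qscale a v)).
by rewrite -[u]reprK -[v]reprK !piE scalerDr.
Qed.
Lemma qscaleDl v : {morph qscale^~ v : a b / a + b}.
Proof.
move=> a b; change (qscale (a + b) v = qadd (qscale a v) (qscale b v)).
by rewrite -[v]reprK !piE scalerDl.
Qed.

HB.instance Definition _ :=
  GRing.Zmodule_isLmodule.Build R quotmod qscaleA qscale1 qscaleDr qscaleDl.

End QuotMod.

Definition cyclic_quot (R : pzRingType) (L : R -> Prop) (HL : left_ideal L) :
  lmodType R := quotmod HL.

Section QuotRing.
Variables (R : pzRingType) (I : R -> Prop) (HI : two_sided_ideal I).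

Definition quotring := quotmod (proj1 HI).
HB.instance Definition _ := GRing.Zmodule.on quotring.
HB.instance Definition _ := EqQuotient.on quotring.

Definition rone : quotring := lift_cst quotring 1.
Definition rmul := lift_op2 quotring *%R.
Canonical pi_rone_morph := PiConst rone.

Lemma IR x r : I x -> I (x * r). Proof. by case: HI => _; apply. Qed.
Lemma IL r x : I x -> I (r * x).
Proof. by case: HI => h _ Ix; apply: (subKZ h). Qed.

Lemma pi_rmul : {morph \pi_quotring : x y / x * y >-> rmul x y}.
Proof.
move=> x y; unlock rmul; apply/eqP; rewrite piE; apply/asboolP.
rewrite -[_ * _](addrNK (x * repr (\pi_quotring y))) -mulrBr.
rewrite -addrA -mulrBl; apply: (subKD (proj1 HI)).
  by apply: IL; first [exact: (Krepr' (proj1 HI)) | exact: (Krepr (proj1 HI))].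
by apply: IR; first [exact: (Krepr' (proj1 HI)) | exact: (Krepr (proj1 HI))].
Qed.
Canonical pi_rmul_morph := PiMorph2 pi_rmul.

Lemma rmulA : associative rmul.
Proof. by move=> x y z; rewrite -[x]reprK -[y]reprK -[z]reprK !piE mulrA. Qed.
Lemma rmul1 : left_id rone rmul.
Proof. by move=> x; rewrite -[x]reprK !piE mul1r. Qed.
Lemma rmulr1 : right_id rone rmul.
Proof. by move=> x; rewrite -[x]reprK !piE mulr1. Qed.
Lemma rmulDl : left_distributive rmul +%R.
Proof.
move=> x y z; change (rmul (qadd x y) z = qadd (rmul x z) (rmul y z)).
by rewrite -[x]reprK -[y]reprK -[z]reprK !piE mulrDl.
Qed.
Lemma rmulDr : right_distributive rmul +%R.
Proof.
move=> x y z; change (rmul x (qadd y z) = qadd (rmul x y) (rmul x z)).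
by rewrite -[x]reprK -[y]reprK -[z]reprK !piE mulrDr.
Qed.

HB.instance Definition _ :=
  GRing.Zmodule_isPzRing.Build quotring rmulA rmul1 rmulr1 rmulDl rmulDr.

End QuotRing.

(* Main.v *)
Require Import Defs.
From HB Require Import structures.
From mathcomp Require Import all_boot all_order all_algebra.
Import GRing.Theory.
Local Open Scope ring_scope.
Local Open Scope quotient_scope.
Section T.
Variables (R : nzRingType) (V : lmodType R) (K : V -> Prop) (HK : submodule K).
Lemma pi0 : (0 : quotmod HK) = \pi 0.
Proof. by rewrite piE. Qed.
Lemma pi_eq0 x : (\pi_(quotmod HK) x = 0) <-> K x.
Proof. rewrite pi0; split.
 move/eqP; rewrite -/(x == 0 %[mod quotmod HK]) => /qequivP; by rewrite subr0.
 move=> h; apply/eqP/qequivP; by rewrite subr0.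
Qed.
Lemma piD x y : \pi_(quotmod HK) (x + y) = \pi_(quotmod HK) x + \pi_(quotmod HK) y.
Proof. by rewrite piE. Qed.
Lemma piZ r x : \pi_(quotmod HK) (r *: x) = r *: \pi_(quotmod HK) x.
Proof. exact: pi_qscale. Qed.
End T.
Search "linear" idfun.
Section Q.
Variables (R : nzRingType) (I : R -> Prop) (HI : two_sided_ideal I).
Lemma qpiM a b : \pi_(quotring HI) (a * b) = \pi_(quotring HI) a * \pi_(quotring HI) b.
Proof. exact: pi_rmul. Qed.
Lemma qpi1 : \pi_(quotring HI) 1 = 1.
Proof. by rewrite piE. Qed.
Lemma qpiD a b : \pi_(quotring HI) (a + b) = \pi_(quotring HI) a + \pi_(quotring HI) b.
Proof. exact: (pi_qadd (proj1 HI)). Qed.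
Lemma qpi_eq0 a : \pi_(quotring HI) a = 0 <-> I a.
Proof. have -> : (0 : quotring HI) = \pi_(quotring HI) 0 by rewrite piE.
split.
 move/eqP; rewrite -/(a == 0 %[mod quotring HI]) => /(qequivP (proj1 HI)); by rewrite subr0.
 move=> h; apply/eqP/(qequivP (proj1 HI)); by rewrite subr0.
Qed.
Lemma qrepr a : I (repr (\pi_(quotring HI) a) - a).
Proof. exact: (Krepr (proj1 HI)). Qed.
End Q.
Section Restr.
Variables (R : nzRingType) (I : R -> Prop) (HI : two_sided_ideal I) (N : lmodType (quotring HI)).
Definition restr : Type := N.
HB.instance Definition _ := GRing.Zmodule.on restr.
Definition rscale (r : R) (x : restr) : restr := (\pi_(quotring HI) r) *: (x : N).
Lemma rscaleA a b v : rscale a (rscale b v) = rscale (a * b) v.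
Proof. by rewrite /rscale scalerA qpiM. Qed.
Lemma rscale1 : left_id 1 rscale.
Proof. by move=> v; rewrite /rscale qpi1 scale1r. Qed.
Lemma rscaleDr : right_distributive rscale +%R.
Proof. by move=> a u v; rewrite /rscale scalerDr. Qed.
Lemma rscaleDl v : {morph rscale^~ v : a b / a + b}.
Proof. by move=> a b; rewrite /rscale qpiD scalerDl. Qed.
HB.instance Definition _ :=
  GRing.Zmodule_isLmodule.Build R restr rscaleA rscale1 rscaleDr rscaleDl.
End Restr.
Section Ext.
Variables (R : nzRingType) (M : lmodType R) (J : R -> Prop) (HJ : two_sided_ideal J)
  (hJ : forall a, J a -> forall m : M, a *: m = 0).
Definition ext (hJ' : forall a, J a -> forall m : M, a *: m = 0) : Type := M.
HB.instance Definition _ := GRing.Zmodule.on (ext hJ).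
Definition escale (q : quotring HJ) (x : ext hJ) : ext hJ := repr q *: (x : M).
Lemma reprS a (x : M) : repr (\pi_(quotring HJ) a) *: x = a *: x.
Proof. apply/eqP; rewrite -subr_eq0 -scalerBl; apply/eqP; apply: hJ; exact: qrepr. Qed.
Lemma escaleA a b v : escale a (escale b v) = escale (a * b) v.
Proof.
rewrite /escale; elim/quotW: a => a; elim/quotW: b => b.
by rewrite -qpiM !reprS scalerA.
Qed.
Lemma escale1 : left_id 1 escale.
Proof. by move=> v; rewrite /escale -(@qpi1 _ _ HJ) reprS scale1r. Qed.
Lemma escaleDr : right_distributive escale +%R.
Proof. by move=> a u v; rewrite /escale scalerDr. Qed.
Lemma escaleDl v : {morph escale^~ v : a b / a + b}.
Proof. move=> a b; rewrite /escale; elim/quotW: a => a; elim/quotW: b => b.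
by rewrite -qpiD !reprS scalerDl. Qed.
HB.instance Definition _ :=
  GRing.Zmodule_isLmodule.Build (quotring HJ) (ext hJ) escaleA escale1 escaleDr escaleDl.
End Ext.
Section Img.
Variables (R : nzRingType) (A B : lmodType R) (phi : A -> B)
  (hD : forall x y, phi (x + y) = phi x + phi y)
  (hZ : forall (r : R) x, phi (r *: x) = r *: phi x)
  (hK : forall x, phi x = 0 -> x = 0).
Lemma phi0 : phi 0 = 0.
Proof. by rewrite -(scale0r (0 : A)) hZ scale0r. Qed.
Lemma image_simple (S : A -> Prop) : simple_submodule S ->
  simple_submodule (fun y => exists2 x, S x & y = phi x).
Proof.
case=> [[S0 SD SZ] [x Sx x0] Smin]; split.
- split.
  + by exists 0 => //; rewrite phi0.
  + by move=> _ _ [a Sa ->] [b Sb ->]; exists (a + b); [apply: SD | rewrite hD].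
  + by move=> r _ [a Sa ->]; exists (r *: a); [apply: SZ | rewrite hZ].
- by exists (phi x); [exists x | move/hK].
- move=> T [T0 TD TZ] TS.
  have subS' : submodule (fun q => S q /\ T (phi q)).
    split.
    + by split => //; rewrite phi0.
    + by move=> a b [Sa Ta] [Sb Tb]; split; [apply: SD | rewrite hD; apply: TD].
    + by move=> r a [Sa Ta]; split; [apply: SZ | rewrite hZ; apply: TZ].
  have [h|h] := Smin _ subS' (fun q (h : S q /\ T (phi q)) => proj1 h).
  + left=> y Ty; have [q Sq eq] := TS y Ty.
    by rewrite eq (h q) ?phi0 //; split => //; rewrite -eq.
  + by right=> y [q Sq ->]; case: (h q Sq).
Qed.
End Img.
Section Cyc.
Variables (R : nzRingType) (M : lmodType R) (m : M)
  (HL : left_ideal (fun a : R => a *: m = 0)).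
Definition cphi (q : cyclic_quot HL) : M := (repr q : R) *: m.
Lemma cphiE a : cphi (\pi_(quotmod HL) a) = a *: m.
Proof.
rewrite /cphi; apply/eqP; rewrite -subr_eq0 -scalerBl; apply/eqP.
exact: (Krepr HL a).
Qed.
Lemma cyclic_transfer : has_simple_submodule (cyclic_quot HL) ->
  exists S : M -> Prop, simple_submodule S /\ (forall x, S x -> exists a : R, x = a *: m).
Proof.
case=> S simS; exists (fun y => exists2 x, S x & y = cphi x); split.
  apply: image_simple simS.
  - move=> x y; elim/quotW: x => a; elim/quotW: y => b.
    by rewrite -piD !cphiE scalerDl.
  - move=> r x; elim/quotW: x => a.
    by rewrite -piZ !cphiE; change ((r * a) *: m = r *: (a *: m)); rewrite scalerA.
  - move=> x; elim/quotW: x => a; rewrite cphiE => h.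
    exact: (proj2 (@pi_eq0 _ _ _ HL a) h).
by move=> _ [q _ ->]; exists (repr q).
Qed.
End Cyc.
Section Main.
Variable R : nzRingType.
Lemma ann_left (M : lmodType R) (m : M) : left_ideal (fun a : R => a *: m = 0).
Proof.
split.
- by rewrite scale0r.
- by move=> x y hx hy; rewrite scalerDl hx hy addr0.
- by move=> r x hx; change ((r * x) *: m = 0); rewrite -scalerA hx scaler0.
Qed.
Lemma ann_ideal (M : lmodType R) : two_sided_ideal (fun a : R => forall m : M, a *: m = 0).
Proof.
split; [split|].
- by move=> m; rewrite scale0r.
- by move=> x y hx hy m; rewrite scalerDl hx hy addr0.
- by move=> r x hx m; change ((r * x) *: m = 0); rewrite -scalerA hx scaler0.
- by move=> x r hx m; rewrite -scalerA hx.
Qed.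

Definition P1 := forall M : lmodType R, non_faithful M -> semiartinian M.
Definition P2 := forall M : lmodType R, non_faithful M -> essential_over_socle M.
Definition P3 := forall M : lmodType R, nonzero_module M -> non_faithful M ->
      has_simple_submodule M.
Definition P4 := forall (I : R -> Prop) (HI : two_sided_ideal I),
      (exists2 x, I x & x <> 0%R) -> left_semiartinian (quotring HI).
Definition P5 := forall (L : R -> Prop) (HL : left_ideal L),
      (exists x, ~ L x) -> (exists2 r, core L r & r <> 0%R) ->
      has_simple_submodule (cyclic_quot HL).

Lemma i13 : P1 -> P3.
Proof. by move=> h M nz nf; apply: (h M nf M idfun) => // n; exists n. Qed.
Lemma i31 : P3 -> P1.
Proof.
move=> h M [r r0 hr] N f surj nzN; apply: h => //; exists r => // n.
by have [m <-] := surj n; rewrite -linearZ hr linear0.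
Qed.
Lemma i23 : P2 -> P3.
Proof.
move=> h M [x0 nx0] nf.
have [||x [_ [s [hs ->]] xne]] := h M nf (fun _ => True).
- by split.
- by exists x0.
case: s hs xne => [|y s] hs xne; first by rewrite big_nil in xne.
by have [S simS _] := hs y (mem_head _ _); exists S.
Qed.
Lemma i32 : P3 -> P2.
Proof.
move=> h M [r r0 hr] N [N0 ND NZ] [n Nn n0].
pose HL := @ann_left M n.
have [|S [simS hS]] := @cyclic_transfer R M n HL.
  apply: h.
    exists (\pi_(quotmod HL) 1) => /(@pi_eq0 _ _ _ HL 1).
    by rewrite scale1r.
  exists r => // q; elim/quotW: q => a.
  rewrite -piZ; apply/(proj2 (@pi_eq0 _ _ _ HL _)).
  by change ((r * a) *: n = 0); rewrite -scalerA hr.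
have simS' := simS; case: simS' => _ [y Sy y0] _.
have [a ya] := hS y Sy.
exists y; split => //; first by rewrite ya; apply: NZ.
exists [:: y]; split; last by rewrite big_seq1.
by move=> z; rewrite mem_seq1 => /eqP ->; exists S.
Qed.

Lemma i35 : P3 -> P5.
Proof.
move=> h L HL [x nLx] [r [J [HJ JL Jr]] r0]; apply: h.
  exists (\pi_(quotmod HL) x) => /(@pi_eq0 _ _ _ HL x); exact: nLx.
exists r => // q; elim/quotW: q => a.
rewrite -piZ; apply/(proj2 (@pi_eq0 _ _ _ HL _)).
apply: JL; exact: (proj2 HJ r a Jr).
Qed.
Lemma i53 : P5 -> P3.
Proof.
move=> h M [m m0] [r r0 hr].
pose HL := @ann_left M m.
have [|S [simS _]] := @cyclic_transfer R M m HL; last by exists S.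
apply: h.
  by exists 1; rewrite scale1r.
exists r => //; exists (fun a : R => forall m : M, a *: m = 0).
split; [exact: ann_ideal | move=> a ha; exact: ha | exact: hr].
Qed.
Lemma i34 : P3 -> P4.
Proof.
move=> h I HI [x Ix x0] N [n n0].
have [||S [[S0 SD SZ] Snz Smin]] := h (@restr R I HI N).
- by exists n.
- exists x => // m; change (\pi_(quotring HI) x *: (m : N) = 0).
  by rewrite (proj2 (@qpi_eq0 R I HI x) Ix) scale0r.
exists S; split => //.
  split => // q y Sy.
  have -> : q = \pi_(quotring HI) (repr q) by rewrite reprK.
  exact: (SZ (repr q) y Sy).
move=> T [T0 TD TZ] TS; apply: (Smin T) => //; split => // a y Ty.
exact: (TZ (\pi_(quotring HI) a) y Ty).
Qed.
Lemma i43 : P4 -> P3.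
Proof.
move=> h M [n n0] [r r0 hr].
pose HJ := ann_ideal M.
have hJ : forall a, (fun a : R => forall m : M, a *: m = 0) a -> forall m : M, a *: m = 0 by [].
have [||S [[S0 SD SZ] Snz Smin]] := h _ HJ _ (@ext R M _ hJ : lmodType (quotring HJ)).
- by exists r.
- by exists n.
exists S; split => //.
  split => // a y Sy.
  rewrite -(@reprS R M _ HJ hJ a y); exact: (SZ (\pi_(quotring HJ) a) y Sy).
move=> T [T0 TD TZ] TS; apply: (Smin T) => //; split => // q y Ty.
exact: (TZ (repr q) y Ty).
Qed.
End Main.

Close Scope quotient_scope.
Close Scope ring_scope.
Theorem proposition3p6 (R : nzRingType) :
  [<->
   (forall M : lmodType R, non_faithful M -> semiartinian M);
   (forall M : lmodType R, non_faithful M -> essential_over_socle M);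
   (forall M : lmodType R, nonzero_module M -> non_faithful M ->
      has_simple_submodule M);
   (forall (I : R -> Prop) (HI : two_sided_ideal I),
      (exists2 x, I x & x <> 0%R) -> left_semiartinian (quotring HI));
   (forall (L : R -> Prop) (HL : left_ideal L),
      (exists x, ~ L x) -> (exists2 r, core L r & r <> 0%R) ->
      has_simple_submodule (cyclic_quot HL))].
Proof.
tfae.
- by move=> h; apply: i32; apply: i13.
- exact: i23.
- exact: i34.
- by move=> h; apply: i35; apply: i43.
- by move=> h; apply: i31; apply: i53.
Qed.
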